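(* Let $\mathcal L$ be a finite language of relation and/or constant symbols, $\mathcal H$ a hereditary $\mathcal L$-property, and $k\ge2$ an integer. If $\mathcal H$ has infinitely many components of size $k$, then $|\mathcal H_n|\ge n^{(1-\frac1k-o(1))n}$.
   Context: A hereditary $\mathcal L$-property is a class of $\mathcal L$-structures closed under isomorphism and substructures; $\mathcal H_n$ is the set of members with universe $[n]$. For an $\mathcal L$-structure $\mathcal M$ and $a,b\in M$, a path from $a$ to $b$ is a finite sequence of tuples $\bar a_1,\dots,\bar a_m$ of elements of $M$ such that each $\bar a_i\in R_i^{\mathcal M}$ for some relation symbol $R_i$ of $\mathcal L$, consecutive tuples share an element, $a$ occurs in $\bar a_1$ and $b$ occurs in $\bar a_m$. A set $A\subseteq M$ is connected if any two distinct elements of $A$ are joined by a path all of whose tuples consist of elements of $A$. A component of $\mathcal M$ is a nonempty connected set $A$ such that whenever $a\in A$ and there is a path from $a$ to $c$, then $c\in A$. $\mathcal H$ has infinitely many components of size $k$ if some $\mathcal M\in\mathcal H$ has infinitely many distinct components of size $k$. *)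

(* Defs.v *)
From HB Require Import structures.
From mathcomp Require Import all_boot.
From Stdlib Require List.
From Stdlib Require Import Reals.

Set Implicit Arguments.
Unset Strict Implicit.
Unset Printing Implicit Defensive.

Record language := Language {
  nR : nat;
  ar : 'I_nR -> nat;
  nC : nat }.

Record structure (L : language) (M : Type) := Structure {
  rel : forall i : 'I_(nR L), (ar i).-tuple M -> Prop;
  cst : 'I_(nC L) -> M }.

Arguments rel {L M} s i t.
Arguments cst {L M} s c.

Definition isomorphic (L : language) (M N : Type)
    (S : structure L M) (T : structure L N) : Prop :=
  exists f : M -> N, bijective f /\
    (forall i t, rel S i t <-> rel T i (map_tuple f t)) /\
    (forall c, f (cst S c) = cst T c).

Definition induced (L : language) (M : Type) (S : structure L M) (A : M -> Prop)
    (hA : forall c, A (cst S c)) : structure L {x : M | A x} :=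
  @Structure L {x : M | A x}
    (fun i t => rel S i (map_tuple (@proj1_sig M A) t))
    (fun c => exist A (cst S c) (hA c)).

Definition hereditary (L : language) (H : forall M : Type, structure L M -> Prop) : Prop :=
  (forall (M N : Type) (S : structure L M) (T : structure L N),
      isomorphic S T -> H M S -> H N T) /\
  (forall (M : Type) (S : structure L M) (A : M -> Prop)
      (hA : forall c, A (cst S c)), (exists x, A x) ->
      H M S -> H {x : M | A x} (@induced L M S A hA)).

Definition rtuple (L : language) (M : Type) : Type :=
  {i : 'I_(nR L) & (ar i).-tuple M}.

Definition occurs (L : language) (M : Type) (x : M) (q : rtuple L M) : Prop :=
  List.In x (tval (tagged q)).

Fixpoint chained (L : language) (M : Type) (p : list (rtuple L M)) : Prop :=
  match p with
  | q1 :: ((q2 :: _) as p') => (exists x, occurs x q1 /\ occurs x q2) /\ chained p'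
  | _ => True
  end.

Definition path_in (L : language) (M : Type) (S : structure L M) (A : M -> Prop)
    (a b : M) (p : list (rtuple L M)) : Prop :=
  (forall q, List.In q p ->
      rel S (tag q) (tagged q) /\ (forall y, occurs y q -> A y)) /\
  chained p /\
  (exists q0 p0, p = q0 :: p0 /\ occurs a q0) /\
  (exists p1 q1, p = p1 ++ q1 :: nil /\ occurs b q1).

Definition connected_set (L : language) (M : Type) (S : structure L M) (A : M -> Prop) : Prop :=
  forall a b, A a -> A b -> a <> b -> exists p, path_in S A a b p.

Definition component (L : language) (M : Type) (S : structure L M) (C : M -> Prop) : Prop :=
  (exists x, C x) /\ connected_set S C /\
  (forall a c, C a -> (exists p, path_in S (fun _ => True) a c p) -> C c).

Definition has_size (M : Type) (C : M -> Prop) (k : nat) : Prop :=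
  exists l : list M, List.NoDup l /\ length l = k /\ (forall x, C x <-> List.In x l).

Definition inf_components (L : language) (M : Type) (S : structure L M) (k : nat) : Prop :=
  exists C : nat -> M -> Prop,
    (forall j, component S (C j) /\ has_size (C j) k) /\
    (forall i j, i <> j -> ~ (forall x, C i x <-> C j x)).

Definition has_inf_components (L : language) (H : forall M : Type, structure L M -> Prop)
    (k : nat) : Prop :=
  exists (M : Type) (S : structure L M), H M S /\ inf_components S k.

(* Codes of L-structures with universe [n] = 'I_n: the set of relation tuples
   and the interpretation of the constants.  Decoding is a bijection between
   codes and L-structures on 'I_n. *)
Definition code (L : language) (n : nat) : Type :=
  ({set {i : 'I_(nR L) & (ar i).-tuple 'I_n}} * {ffun 'I_(nC L) -> 'I_n})%type.

Definition decode (L : language) (n : nat) (c : code L n) : structure L 'I_n :=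
  @Structure L 'I_n (fun i t => Tagged (fun i => (ar i).-tuple 'I_n) t \in c.1)
                    (fun j => c.2 j).

(* |H_n| >= x : there are at least x distinct members of H with universe [n]. *)
Definition card_Hn_ge (L : language) (H : forall M : Type, structure L M -> Prop)
    (n : nat) (x : R) : Prop :=
  exists s : seq (code L n), uniq s /\
    (forall c, c \in s -> H 'I_n (decode c)) /\ (x <= INR (size s))%R.

(* Main.v *)
From Stdlib Require Import Reals Lra Lia Classical ClassicalEpsilon ProofIrrelevance List.
Local Open Scope R_scope.

Lemma exp_le' x y : x <= y -> exp x <= exp y.
Proof. intros [H|H]; [left; now apply exp_increasing | subst; lra]. Qed.

Lemma ln_le' x y : 0 < x -> x <= y -> ln x <= ln y.
Proof. intros H [H1|H1]; [left; now apply ln_increasing | subst; lra]. Qed.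

Lemma exp_pow' x (n : nat) : exp x ^ n = exp (INR n * x).
Proof.
  induction n as [|n IH].
  - simpl. rewrite Rmult_0_l, exp_0; lra.
  - rewrite S_INR. cbn [pow]. rewrite IH, <- exp_plus. f_equal. lra.
Qed.

Lemma fact_bound (m : nat) : INR m ^ m <= exp (INR m) * INR (Factorial.fact m).
Proof.
  induction m as [|m IH].
  - simpl. rewrite exp_0; lra.
  - assert (H1 : INR (S m) ^ m <= exp 1 * INR m ^ m).
    { destruct m as [|m'].
      - simpl. pose proof (exp_ineq1_le 1); lra.
      - set (m := S m') in *.
        assert (Hm : 0 < INR m) by (apply lt_0_INR; unfold m; lia).
        assert (E : INR (S m) = INR m * (1 + / INR m)) by (rewrite S_INR; field; lra).
        rewrite E, Rpow_mult_distr.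
        assert ((1 + / INR m) ^ m <= exp 1).
        { replace 1 with (INR m * / INR m) at 2 by (field; lra).
          rewrite <- exp_pow'. apply pow_incr. split.
          - pose proof (Rinv_0_lt_compat _ Hm); lra.
          - apply exp_ineq1_le. }
        pose proof (pow_le (INR m) m (Rlt_le _ _ Hm)).
        rewrite (Rmult_comm (exp 1)). apply Rmult_le_compat_l; lra. }
    set (a := INR (S m)).
    assert (Ha : a = INR m + 1) by (unfold a; apply S_INR).
    change (a ^ S m) with (a * a ^ m).
    change (Factorial.fact (S m)) with (S m * Factorial.fact m)%nat.
    rewrite mult_INR. fold a. replace (exp a) with (exp (INR m) * exp 1) by (rewrite Ha, exp_plus; reflexivity).
    pose proof (pos_INR (S m)). pose proof (exp_pos 1). pose proof (exp_pos (INR m)).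
    pose proof (INR_fact_lt_0 m). change (INR (S m)) with a in H1, H.
    apply Rle_trans with (a * (exp 1 * INR m ^ m)).
    + apply Rmult_le_compat_l; lra.
    + replace (exp (INR m) * exp 1 * (a * INR (Factorial.fact m)))
        with (a * (exp 1 * (exp (INR m) * INR (Factorial.fact m)))) by ring.
      apply Rmult_le_compat_l; [lra|]. apply Rmult_le_compat_l; lra.
Qed.

Lemma fact_lnbound (m : nat) : (0 < m)%nat ->
  exp (INR m * ln (INR m) - INR m) <= INR (Factorial.fact m).
Proof.
  intros Hm. pose proof (fact_bound m).
  assert (HmR : 0 < INR m) by (apply lt_0_INR; lia).
  rewrite <- Rpower_pow in H by lra. unfold Rpower in H.
  unfold Rminus; rewrite exp_plus, exp_Ropp.
  pose proof (exp_pos (INR m)).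
  apply (Rmult_le_reg_l (exp (INR m))); auto.
  replace (exp (INR m) * (exp (INR m * ln (INR m)) * / exp (INR m))) with (exp (INR m * ln (INR m))) by (field; lra).
  exact H.
Qed.

Lemma asym (k B : nat) (eps : R) : (2 <= k)%nat -> 0 < eps ->
  exists N : nat, forall n m : nat, (N <= n)%nat -> INR n - INR B < INR m * INR k ->
    (0 < m)%nat /\
    Rpower (INR n) ((1 - 1 / INR k - eps) * INR n) <= INR (Factorial.fact m) ^ (k - 1).
Proof.
  intros Hk He.
  assert (HkR : 2 <= INR k) by (replace 2 with (INR 2) by (simpl; lra); apply le_INR; lia).
  set (D := ln (2 * INR k) + 1).
  assert (HD : 0 <= D).
  { unfold D. assert (0 <= ln (2 * INR k)). { rewrite <- ln_1. apply ln_le'; lra. } lra. }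
  set (X := Rmax (2 * INR B + 1) (Rmax (2 * INR B / eps) (exp (D * (1 + 2 / eps))))).
  destruct (INR_unbounded X) as [N HN].
  exists N. intros n m Hn Hm.
  assert (HnN : INR N <= INR n) by (apply le_INR; lia).
  assert (Hx1 : 2 * INR B + 1 <= INR n).
  { pose proof (Rmax_l (2 * INR B + 1) (Rmax (2 * INR B / eps) (exp (D * (1 + 2 / eps))))). fold X in H. lra. }
  assert (Hx2 : 2 * INR B / eps <= INR n).
  { pose proof (Rmax_r (2 * INR B + 1) (Rmax (2 * INR B / eps) (exp (D * (1 + 2 / eps))))).
    pose proof (Rmax_l (2 * INR B / eps) (exp (D * (1 + 2 / eps)))). fold X in H. lra. }
  assert (Hx3 : exp (D * (1 + 2 / eps)) <= INR n).
  { pose proof (Rmax_r (2 * INR B + 1) (Rmax (2 * INR B / eps) (exp (D * (1 + 2 / eps))))).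
    pose proof (Rmax_r (2 * INR B / eps) (exp (D * (1 + 2 / eps)))). fold X in H. lra. }
  pose proof (pos_INR B) as HB.
  assert (Hn0 : 0 < INR n) by lra.
  assert (HmR : INR n / (2 * INR k) <= INR m).
  { apply (Rmult_le_reg_r (2 * INR k)); [lra|]. field_simplify; [|lra]. lra. }
  assert (Hm0 : 0 < INR m).
  { apply Rlt_le_trans with (INR n / (2 * INR k)); auto. apply Rdiv_lt_0_compat; lra. }
  assert (Hm0' : (0 < m)%nat) by (destruct m; [simpl in Hm0; lra | lia]).
  split; [exact Hm0'|].
  set (Ln := ln (INR n)). set (Lm := ln (INR m)).
  assert (HLn : D * (1 + 2 / eps) <= Ln).
  { unfold Ln. rewrite <- (ln_exp (D * (1 + 2 / eps))). apply ln_le'; auto. apply exp_pos. }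
  assert (HLm : Ln - D + 1 <= Lm).
  { unfold Lm. apply Rle_trans with (ln (INR n / (2 * INR k))).
    - unfold Rdiv. rewrite ln_mult, ln_Rinv; try lra.
      + unfold D, Ln; lra.
      + apply Rinv_0_lt_compat; lra.
    - apply ln_le'; auto. apply Rdiv_lt_0_compat; lra. }
  assert (HF : exp (INR (k - 1) * (INR m * Lm - INR m)) <= INR (Factorial.fact m) ^ (k - 1)).
  { rewrite <- exp_pow'. apply pow_incr. split; [left; apply exp_pos|]. apply fact_lnbound; auto. }
  apply Rle_trans with (2 := HF). unfold Rpower. apply exp_le'. fold Ln.
  rewrite minus_INR by lia. simpl (INR 1).
  set (q := 1 / INR k).
  assert (Hq : 0 < q <= 1 / 2).
  { unfold q; split. apply Rdiv_lt_0_compat; lra.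
    apply Rmult_le_reg_r with (INR k * 2); [lra|]. field_simplify; lra. }
  assert (Hkq : INR k * q = 1) by (unfold q; field; lra).
  assert (HX : (1 - q) * INR n - INR B <= (INR k - 1) * INR m).
  { assert ((INR k - 1) * INR m = (1 - q) * (INR m * INR k)) by (unfold q; field; lra).
    rewrite H. nra. }
  assert (HLn0 : D <= Ln).
  { apply Rle_trans with (2 := HLn). assert (0 <= D * (2 / eps)).
    { apply Rmult_le_pos; auto. unfold Rdiv; apply Rmult_le_pos; [lra| left; apply Rinv_0_lt_compat; lra]. } nra. }
  assert (HY : 0 <= (1 - q) * INR n - INR B) by nra.
  assert (Hprod : ((1 - q) * INR n - INR B) * (Ln - D) <= (INR k - 1) * INR m * (Lm - 1)).
  { apply Rmult_le_compat; lra. }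
  assert (H1 : 2 * D <= eps * Ln).
  { assert (eps * (D * (1 + 2 / eps)) = eps * D + 2 * D) by (field; lra). nra. }
  assert (H2 : 2 * INR B <= eps * INR n).
  { assert (eps * (2 * INR B / eps) = 2 * INR B) by (field; lra). nra. }
  assert (HLn00 : 0 <= Ln) by lra.
  assert (H3 : INR n * D + INR B * Ln <= eps * INR n * Ln) by nra.
  replace ((INR k - 1) * (INR m * Lm - INR m)) with ((INR k - 1) * INR m * (Lm - 1)) by ring.
  assert (0 <= q * INR n * D) by (apply Rmult_le_pos; [apply Rmult_le_pos|]; lra).
  assert (0 <= INR B * D) by (apply Rmult_le_pos; lra).
  apply Rle_trans with (2 := Hprod). unfold q in *. nra.
Qed.

Local Close Scope R_scope.
From mathcomp Require Import all_boot zify fingroup perm.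
Require Import Defs.
Unset Strict Implicit.
Unset Printing Implicit Defensive.

Definition pb (P : Prop) : bool := if excluded_middle_informative P then true else false.
Lemma pbP (P : Prop) : reflect P (pb P).
Proof. rewrite /pb; case: excluded_middle_informative => h; [exact: ReflectT|exact: ReflectF]. Qed.

Section Fam.
Variables (L : language) (H : forall M : Type, structure L M -> Prop).
Variables (M : Type) (S : structure L M).

Lemma family_bound (hered : hereditary H) (HS : H M S) (n : nat) (n0 : (0 < n)%N)
  (T : finType) (f : T -> 'I_n -> M)
  (finj : forall s, injective (f s))
  (fcst : forall s c, exists p, f s p = cst S c)
  (fdist : forall s t, (forall i (u : (ar i).-tuple 'I_n),
        rel S i (map_tuple (f s) u) <-> rel S i (map_tuple (f t) u)) -> s = t) :
  card_Hn_ge H n (INR #|T|).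
Proof.
  pose p0 : 'I_n := Ordinal n0.
  pose h s (y : M) : 'I_n := epsilon (inhabits p0) (fun p => f s p = y).
  have hP s y : (exists p, f s p = y) -> f s (h s y) = y.
    by move=> ex; apply: (epsilon_spec (inhabits p0) (fun p => f s p = y)).
  have hK s p : h s (f s p) = p by apply: finj; apply: hP; exists p.
  pose cd s : code L n := ([set q | pb (rel S (tag q) (map_tuple (f s) (tagged q)))],
                           [ffun c => h s (cst S c)]).
  have cdE s i (u : (ar i).-tuple 'I_n) :
      (Tagged (fun i => (ar i).-tuple 'I_n) u \in (cd s).1) <-> rel S i (map_tuple (f s) u).
    by rewrite inE; split; move/pbP.
  exists (map cd (enum T)); split; [|split].
  - rewrite map_inj_uniq ?enum_uniq // => s t E.
    apply: fdist => i u; rewrite -cdE E; exact: cdE.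
  - move=> c /mapP [s _ ->].
    pose A := fun y => exists p, f s p = y.
    have hA : forall c, A (cst S c) by move=> c'; exact: fcst.
    have HI := hered.2 M S A hA (ex_intro _ (f s p0) (ex_intro _ p0 erefl)) HS.
    apply: (hered.1 _ _ _ _ _ HI).
    exists (fun x => h s (proj1_sig x)); split; [|split].
    + exists (fun p => exist A (f s p) (ex_intro _ p erefl)).
      * move=> [y Ay] /=; apply: eq_sig_hprop => /=; [move=> *; exact: proof_irrelevance|].
        exact: hP.
      * by move=> p /=; rewrite hK.
    + move=> i t /=. rewrite cdE.
      have -> : map_tuple (f s) (map_tuple (fun x : {x : M | A x} => h s (proj1_sig x)) t)
              = map_tuple (@proj1_sig M A) t.
        apply: val_inj => /=; rewrite -map_comp; apply: eq_map => -[y Ay] /=; exact: hP.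
      by [].
    + by move=> c' /=; rewrite ffunE.
  - by rewrite size_map -cardE; apply: Rle_refl.
Qed.
End Fam.

Set Implicit Arguments.

Section Constr.
Variables (k' m' : nat).
Local Notation k := k'.+2.
Local Notation m := m'.+1.
Local Notation T := {ffun 'I_k'.+1 -> {perm 'I_m}}.

Definition sg (s : T) (l j : nat) : nat :=
  if l is l'.+1 then nat_of_ord (s (inord l') (inord j)) else j.

Lemma sg_lt s l j : (l < k)%N -> (j < m)%N -> (sg s l j < m)%N.
Proof. by case: l => [|l] //= _ _. Qed.

Lemma sg_inj s l j j' : (j < m)%N -> (j' < m)%N -> sg s l j = sg s l j' -> j = j'.
Proof.
  case: l => [|l] //= hj hj' /val_inj/perm_inj E.
  by rewrite -(inordK hj) -(inordK hj') E.
Qed.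

Lemma sg_surj s l i : (l < k)%N -> (i < m)%N -> exists2 j, (j < m)%N & sg s l j = i.
Proof.
  case: l => [|l] /= hl hi; first by exists i.
  exists (val ((s (inord l))^-1%g (Ordinal hi))); first exact: ltn_ord.
  by rewrite inord_val permKV.
Qed.
End Constr.


Lemma in_seqmap (A B : Type) (g : A -> B) x (s : seq A) : In x s -> In (g x) (map g s).
Proof. elim: s => //= y s IH [->|h]; [left|right; apply: IH] => //. Qed.

Lemma map_id_in (A : Type) (g : A -> A) (s : seq A) : (forall x, In x s -> g x = x) -> map g s = s.
Proof. elim: s => //= y s IH h; rewrite h; [rewrite IH // => x hx; apply: h; right|left] => //. Qed.

Section Transport.
Variables (L : language) (M : Type) (S : structure L M).

Definition mapq (g : M -> M) (q : rtuple L M) : rtuple L M :=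
  existT _ (tag q) (map_tuple g (tagged q)).

Lemma occurs_map g x q : occurs x q -> occurs (g x) (mapq g q).
Proof. by rewrite /occurs /mapq /=; apply: in_seqmap. Qed.

Lemma chained_map g p : chained p -> chained (List.map (mapq g) p).
Proof.
  elim: p => //= q1 [|q2 p] IH //= [[x [h1 h2]] hc]; split.
  - by exists (g x); split; apply: occurs_map.
  - exact: (IH hc).
Qed.

Lemma path_transport (g : M -> M) (A : M -> Prop) a b p :
  path_in S A a b p ->
  (forall q, List.In q p -> rel S (tag q) (map_tuple g (tagged q))) ->
  path_in S (fun _ => True) (g a) (g b) (List.map (mapq g) p).
Proof.
  move=> [h1 [h2 [[q0 [p0 [e0 o0]]] [p1 [q1 [e1 o1]]]]]] hg.
  split; [|split; [|split]].
  - move=> q /in_map_iff [q' [<- hq']]; split => //; exact (hg q' hq').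
  - exact: chained_map.
  - exists (mapq g q0), (List.map (mapq g) p0); rewrite e0; split => //; exact: occurs_map.
  - exists (List.map (mapq g) p1), (mapq g q1); rewrite e1 List.map_app; split => //; exact: occurs_map.
Qed.

Lemma path_weaken (A : M -> Prop) a b p : path_in S A a b p -> path_in S (fun _ => True) a b p.
Proof.
  move=> [h1 h2]; split => // q hq; split => //; exact: (proj1 (h1 q hq)).
Qed.

Lemma comp_sub (C1 C2 : M -> Prop) x : component S C1 -> component S C2 -> C1 x -> C2 x ->
  forall y, C1 y -> C2 y.
Proof.
  move=> [_ [hc1 _]] [_ [_ hcl2]] h1 h2 y hy.
  case: (classic (x = y)) => [<-//|ne].
  have [p hp] := hc1 x y h1 hy ne.
  apply: (hcl2 x y h2); exists p; exact: path_weaken hp.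
Qed.
End Transport.

Section Constr2.
Variables (k' m' : nat).
Local Notation k := k'.+2.
Local Notation m := m'.+1.
Local Notation T := {ffun 'I_k'.+1 -> {perm 'I_m}}.
Variables (L : language) (M : Type) (S : structure L M) (x0 : M) (Kl : list M)
  (comp : nat -> list M) (Cc : nat -> M -> Prop) (r : nat).
Hypothesis hKn : NoDup Kl.
Hypothesis hKc : forall x, In x Kl -> exists c, x = cst S c.
Hypothesis hcK : forall c, In (cst S c) Kl.
Hypothesis hcomp : forall i, (i <= m)%N -> NoDup (comp i) /\ length (comp i) = k /\
  component S (Cc i) /\ (forall x, Cc i x <-> In x (comp i)).
Hypothesis hgood : forall i c, (i <= m)%N -> ~ Cc i (cst S c).
Hypothesis hdisj : forall i i' x, (i <= m)%N -> (i' <= m)%N -> i <> i' -> Cc i x -> Cc i' x -> False.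
Hypothesis hr : (r < k)%N.

Local Notation c0 := (length Kl).
Local Notation n := (c0 + r + k * m)%N.

Definition fpos (s : T) (p : nat) : M :=
  if (p < c0)%N then List.nth p Kl x0
  else if (p < c0 + r)%N then List.nth (p - c0) (comp m) x0
  else List.nth ((p - c0 - r) %/ m) (comp (sg s ((p - c0 - r) %/ m) ((p - c0 - r) %% m))) x0.

Lemma fpos_block s l j : (j < m)%N ->
  fpos s (c0 + r + l * m + j) = List.nth l (comp (sg s l j)) x0.
Proof.
  move=> hj; rewrite /fpos.
  have -> : (c0 + r + l * m + j < c0)%N = false by lia.
  have -> : (c0 + r + l * m + j < c0 + r)%N = false by lia.
  have -> : (c0 + r + l * m + j - c0 - r = l * m + j)%N by lia.
  by rewrite divnMDl // modnMDl (divn_small hj) (modn_small hj) addn0.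
Qed.

Lemma fpos_cases s p : (p < n)%N ->
  [\/ (p < c0)%N /\ fpos s p = List.nth p Kl x0,
      (c0 <= p < c0 + r)%N /\ fpos s p = List.nth (p - c0) (comp m) x0 |
      exists l j, [/\ (l < k)%N, (j < m)%N, p = (c0 + r + l * m + j)%N &
                      fpos s p = List.nth l (comp (sg s l j)) x0]].
Proof.
  move=> hp; case: (ltnP p c0) => h1.
    by apply: Or31; rewrite /fpos h1.
  case: (ltnP p (c0 + r)) => h2.
    by apply: Or32; rewrite /fpos h2 ltnNge h1 /=; split => //; apply/andP.
  apply: Or33; exists ((p - c0 - r) %/ m), ((p - c0 - r) %% m).
  have E : (p = c0 + r + (p - c0 - r) %/ m * m + (p - c0 - r) %% m)%N.
    by rewrite -addnA -divn_eq; lia.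
  split.
  - rewrite ltn_divLR //; lia.
  - by rewrite ltn_pmod.
  - exact: E.
  - by rewrite {1}E fpos_block // ltn_pmod.
Qed.

Lemma comp_in i l : (i <= m)%N -> (l < k)%N -> Cc i (List.nth l (comp i) x0).
Proof.
  move=> hi hl; have [_ [hlen [_ hiff]]] := hcomp hi.
  apply/hiff; apply: List.nth_In; rewrite hlen; lia.
Qed.

Lemma Kl_not_comp p i l : (p < c0)%N -> (i <= m)%N -> (l < k)%N ->
  List.nth p Kl x0 = List.nth l (comp i) x0 -> False.
Proof.
  move=> hp hi hl E.
  have [c hc] := hKc (List.nth_In Kl x0 (ltP hp)).
  apply: (@hgood _ c hi); rewrite -hc E; exact: comp_in.
Qed.

Lemma comp_eq i i' l l' : (i <= m)%N -> (i' <= m)%N -> (l < k)%N -> (l' < k)%N ->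
  List.nth l (comp i) x0 = List.nth l' (comp i') x0 -> i = i' /\ l = l'.
Proof.
  move=> hi hi' hl hl' E.
  have ii : i = i'.
    apply: NNPP => ne; apply: (hdisj hi hi' ne (comp_in hi hl)); rewrite E; exact: comp_in.
  subst i'; split => //.
  have [hnd [hlen _]] := hcomp hi.
  apply: (proj1 (List.NoDup_nth (comp i) x0) hnd) => //; rewrite hlen; apply/ltP => //.
Qed.

Lemma fpos_inj s p p' : (p < n)%N -> (p' < n)%N -> fpos s p = fpos s p' -> p = p'.
Proof.
  have hKlt p1 : (p1 < c0)%N -> (p1 < length Kl)%coq_nat by move/ltP.
  move=> hp hp'.
  have hm : (m <= m)%N by [].
  case: (fpos_cases s hp) => [[h1 e1]|[h1 e1]|[l [j [hl hj -> e1]]]];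
  case: (fpos_cases s hp') => [[h2 e2]|[h2 e2]|[l' [j' [hl' hj' -> e2]]]];
  rewrite e1 e2 => E.
  - exact: (proj1 (List.NoDup_nth Kl x0) hKn _ _ (hKlt _ h1) (hKlt _ h2) E).
  - have hx : (p' - c0 < k)%N by lia.
    by case: (Kl_not_comp h1 hm hx E).
  - by case: (Kl_not_comp h1 (ltnW (sg_lt s hl' hj')) hl' E).
  - have hx : (p - c0 < k)%N by lia.
    by case: (Kl_not_comp h2 hm hx (esym E)).
  - have hx : (p - c0 < k)%N by lia.
    have hx' : (p' - c0 < k)%N by lia.
    have [_ ] := comp_eq hm hm hx hx' E; lia.
  - have hx : (p - c0 < k)%N by lia.
    have [] := comp_eq hm (ltnW (sg_lt s hl' hj')) hx hl' E.
    move=> e _; move: (sg_lt s hl' hj'); rewrite -e; lia.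
  - by case: (Kl_not_comp h2 (ltnW (sg_lt s hl hj)) hl (esym E)).
  - have hx' : (p' - c0 < k)%N by lia.
    have [] := comp_eq (ltnW (sg_lt s hl hj)) hm hl hx' E.
    move=> e; move: (sg_lt s hl hj); rewrite e; lia.
  - have [e el] := comp_eq (ltnW (sg_lt s hl hj)) (ltnW (sg_lt s hl' hj')) hl hl' E.
    subst l'; have := sg_inj hj hj' e; lia.
Qed.

Lemma pos_lt l j : (l < k)%N -> (j < m)%N -> (c0 + r + l * m + j < n)%N.
Proof.
  move=> hl hj; have : (l.+1 * m <= k * m)%N by rewrite leq_mul2r hl orbT.
  rewrite mulSn; lia.
Qed.

Lemma fpos_cst s c : exists p : 'I_n, fpos s p = cst S c.
Proof.
  have [p [hp e]] := In_nth Kl (cst S c) x0 (hcK c).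
  have hpn : (p < n)%N by move/ltP: hp; lia.
  exists (Ordinal hpn); rewrite /fpos /=.
  by have -> : (p < c0)%N by apply/ltP.
Qed.

Lemma fpos_dist (s t : T) :
  (forall i (u : (ar i).-tuple 'I_n),
      rel S i (map_tuple (fun p : 'I_n => fpos s p) u) <->
      rel S i (map_tuple (fun p : 'I_n => fpos t p) u)) -> s = t.
Proof.
  move=> hiff; apply/ffunP => l; apply/permP => j; apply: val_inj; apply: NNPP => ne.
  have hl : (l.+1 < k)%N by rewrite ltnS ltn_ord.
  have hj : (j < m)%N := ltn_ord j.
  set i := sg s l.+1 j.
  have ei : i = s l j by rewrite /i /= !inord_val.
  have hi : (i < m)%N by apply: sg_lt.
  have hi' : (sg t l.+1 j < m)%N by apply: sg_lt.
  have ne' : sg t l.+1 j <> i by rewrite ei /= !inord_val => e; apply: ne; symmetry; exact: e.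
  have hP0 := pos_lt (ltn0Sn k'.+1) hi.
  have hPl := pos_lt hl hj.
  pose P0 : 'I_n := Ordinal hP0.
  pose Pl : 'I_n := Ordinal hPl.
  have fs0 : fpos s P0 = List.nth 0 (comp i) x0 by rewrite fpos_block.
  have ft0 : fpos t P0 = List.nth 0 (comp i) x0 by rewrite fpos_block.
  have fsl : fpos s Pl = List.nth l.+1 (comp i) x0 by rewrite fpos_block.
  have ftl : fpos t Pl = List.nth l.+1 (comp (sg t l.+1 j)) x0 by rewrite fpos_block.
  have him : (i <= m)%N by apply: ltnW.
  have [_ [hlen [[_ [hconn hclos]] hCi]]] := hcomp him.
  set a := List.nth 0 (comp i) x0 in fs0 ft0.
  set b := List.nth l.+1 (comp i) x0 in fsl.
  have hab : a <> b by move=> e; have [_ ] := comp_eq him him (ltn0Sn _) hl e.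
  have [p hp] := hconn a b (comp_in him (ltn0Sn _)) (comp_in him hl) hab.
  pose h (y : M) : 'I_n := epsilon (inhabits P0) (fun p : 'I_n => fpos s p = y).
  have hP y : Cc i y -> fpos s (h y) = y.
    move=> /hCi hy; apply: (epsilon_spec (inhabits P0) (fun p : 'I_n => fpos s p = y)).
    have [l' [hl' <-]] := In_nth _ _ x0 hy.
    rewrite hlen in hl'; move/ltP: hl' => hl'.
    have [j' hj' ej'] := sg_surj s hl' hi.
    exists (Ordinal (pos_lt hl' hj')); by rewrite fpos_block // ej'.
  pose g (y : M) : M := fpos t (h y).
  have hpath := path_transport (g := g) hp.
  have hga : g a = a.
    rewrite /g; have -> : h a = P0; last by [].
    apply: val_inj; apply: (@fpos_inj s _ _ (ltn_ord _) (ltn_ord _)); rewrite hP ?fs0 //; exact: comp_in.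
  have hgb : g b = fpos t Pl.
    rewrite /g; have -> : h b = Pl; last by [].
    apply: val_inj; apply: (@fpos_inj s _ _ (ltn_ord _) (ltn_ord _)); rewrite hP ?fsl //; exact: comp_in.
  have hrel : forall q, List.In q p -> rel S (tag q) (map_tuple g (tagged q)).
    move=> q hq; have [hr1 hr2] := proj1 hp q hq.
    have eq1 : tagged q = map_tuple (fun p : 'I_n => fpos s p) (map_tuple h (tagged q)).
      apply: val_inj => /=; rewrite -map_comp map_id_in // => y hy; exact: hP (hr2 y hy).
    have eq2 : map_tuple g (tagged q) = map_tuple (fun p : 'I_n => fpos t p) (map_tuple h (tagged q)).
      by apply: val_inj => /=; rewrite -map_comp.
    rewrite eq2; apply/hiff; rewrite -eq1; exact: hr1.
  have hpt := hpath hrel; rewrite hga in hpt.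
  have := hclos a (g b) (comp_in him (ltn0Sn _)) (ex_intro _ _ hpt).
  rewrite hgb ftl => hc.
  apply: (hdisj him (ltnW hi') (nesym ne') hc); apply: comp_in => //; exact: ltnW.
Qed.


Lemma constr_bound (H : forall M : Type, structure L M -> Prop) :
  hereditary H -> H M S -> card_Hn_ge H n (INR #|T|).
Proof.
  move=> hered HS.
  have n0 : (0 < n)%N by rewrite !addn_gt0 orbT.
  apply: (@family_bound L H M S hered HS n n0 T (fun s (p : 'I_n) => fpos s p)).
  - by move=> s p p' e; apply: val_inj; apply: (fpos_inj (ltn_ord p) (ltn_ord p') e).
  - exact: fpos_cst.
  - exact: fpos_dist.
Qed.
End Constr2.

Set Implicit Arguments.
Unset Strict Implicit.
Unset Printing Implicit Defensive.

Lemma card_mono (L : language) (H : forall M : Type, structure L M -> Prop) n (x y : R) :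
  Rle x y -> card_Hn_ge H n y -> card_Hn_ge H n x.
Proof. move=> hxy [s [h1 [h2 h3]]]; exists s; split => //; split => //; lra. Qed.

Lemma In_seqmap_inv (A B : Type) (f : A -> B) x (s : seq A) :
  In x (map f s) -> exists y, In y s /\ x = f y.
Proof.
  elim: s => //= a s IH [<-|h]; first by exists a; split => //; left.
  by have [y [hy ->]] := IH h; exists y; split => //; right.
Qed.

Lemma In_mem (T : eqType) (x : T) (s : seq T) : x \in s -> In x s.
Proof. elim: s => //= a s IH; rewrite inE => /orP [/eqP ->|h]; [left|right; exact: IH] => //. Qed.

Lemma fact_eq n : n`! = Factorial.fact n.
Proof. by elim: n => //= n IH; rewrite factS IH. Qed.

Lemma expn_eq a b : (a ^ b)%N = Nat.pow a b.
Proof. by elim: b => //= b IH; rewrite expnS IH. Qed.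

Lemma comp_disj (L : language) (M : Type) (S : structure L M) (C : nat -> M -> Prop)
  (hC : forall j, component S (C j))
  (hdist : forall i j, i <> j -> ~ (forall x, C i x <-> C j x)) j j' x :
  j <> j' -> C j x -> C j' x -> False.
Proof.
  move=> ne h1 h2; apply: (hdist _ _ ne) => y; split.
  - exact: (comp_sub (hC j) (hC j') h1 h2).
  - exact: (comp_sub (hC j') (hC j) h2 h1).
Qed.

Lemma goods_size (L : language) (M : Type) (S : structure L M) (C : nat -> M -> Prop)
  (hC : forall j, component S (C j))
  (hdist : forall i j, i <> j -> ~ (forall x, C i x <-> C j x)) K :
  (K <= size (filter (fun j => pb (forall c, ~ C j (cst S c))) (iota 0 (nC L + K))))%N.
Proof.
  set good := (fun j => pb (forall c, ~ C j (cst S c))).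
  set s := iota 0 (nC L + K).
  have hs : size s = (nC L + K)%N by rewrite size_iota.
  have := count_predC good s; rewrite size_filter hs.
  suff : (count (predC good) s <= nC L)%N by lia.
  rewrite -size_filter.
  case E : (nC L) => [|nc].
  - rewrite leqn0 size_eq0 -[_ == _]negbK -has_filter; apply/hasPn => j _ /=.
    apply/negPn/pbP => c; exfalso; move: c; rewrite E => -[]//.
  - have o : 'I_(nC L) by rewrite E; exact: ord0.
    pose phi j := epsilon (inhabits o) (fun c => C j (cst S c)).
    have phiP j : ~~ good j -> C j (cst S (phi j)).
      move=> /pbP nb; apply: (epsilon_spec (inhabits o) (fun c => C j (cst S c))).
      by apply: NNPP => ne; apply: nb => c hc; apply: ne; exists c.
    rewrite -(size_map phi).
    have -> : nc.+1 = #|'I_(nC L)| by rewrite card_ord E.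
    rewrite cardE.
    apply: uniq_leq_size; last by move=> x _; rewrite mem_enum.
    rewrite map_inj_in_uniq ?filter_uniq ?iota_uniq //.
    move=> j j' /[!mem_filter] /andP [hj _] /andP [hj' _] e.
    apply: NNPP => ne; apply: (comp_disj hC hdist ne (phiP j hj)); rewrite e; exact: phiP.
Qed.

Unset Implicit Arguments.
From Stdlib Require Import Reals.

Theorem mainTheorem8 (L : language) (H : forall M : Type, structure L M -> Prop)
    (k : nat) :
  hereditary H -> (2 <= k)%N -> has_inf_components H k ->
  forall eps : R, (0 < eps)%R ->
  exists N : nat, forall n : nat, (N <= n)%N ->
    card_Hn_ge H n (Rpower (INR n) ((1 - 1 / INR k - eps) * INR n)).
Proof.
  case: k => [|[|k']] // hered _ [M [S [HS [C [hC hdist]]]]] eps heps.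
  have [x0 _] : exists x : M, True.
    by case: (proj1 (proj1 (hC 0%N))) => x _; exists x.
  have hCc j : component S (C j) := proj1 (hC j).
  pose lst j : list M := proj1_sig (constructive_indefinite_description _ (proj2 (hC j))).
  have lstP j : NoDup (lst j) /\ length (lst j) = k'.+2 /\ (forall x, C j x <-> In x (lst j)).
    by rewrite /lst; case: constructive_indefinite_description => l [? [? ?]].
  pose dec := fun x y : M => excluded_middle_informative (x = y).
  pose Kl := nodup dec (map (cst S) (enum 'I_(nC L))).
  have [N HN] := asym k'.+2 (length Kl + k'.+2) eps ltac:(lia) heps.
  exists (maxn N (length Kl)) => n hn.
  set c0 := length Kl in HN *.
  set m := ((n - c0) %/ k'.+2)%N.
  set r := ((n - c0) %% k'.+2)%N.
  have Ed : (n - c0 = m * k'.+2 + r)%N by rewrite /m /r -divn_eq.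
  have hr : (r < k'.+2)%N by rewrite ltn_pmod.
  have hreal : (INR n - INR (c0 + k'.+2) < INR m * INR k'.+2)%R.
    have h : (n < Nat.add (Nat.add c0 k'.+2) (Nat.mul m k'.+2))%coq_nat by lia.
    apply lt_INR in h; rewrite plus_INR mult_INR in h.
    change (INR (c0 + k'.+2)%N) with (INR (Nat.add c0 k'.+2)); lra.
  have [hm0 hb] := HN n m ltac:(lia) hreal.
  apply: (card_mono hb).
  have [m' Em] : exists m', m = m'.+1 by exists m.-1; lia.
  pose good := fun j => pb (forall c, ~ C j (cst S c)).
  pose Gl := filter good (iota 0 (nC L + m'.+2)).
  have hGl := goods_size hCc hdist m'.+2.
  pose G i := nth 0%N Gl i.
  have Gin i : (i <= m'.+1)%N -> G i \in Gl.
    move=> hi; rewrite mem_nth //; exact: (leq_ltn_trans hi hGl).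
  have Ginj i i' : (i <= m'.+1)%N -> (i' <= m'.+1)%N -> G i = G i' -> i = i'.
    move=> hi hi' e; apply/eqP.
    rewrite -(@nth_uniq _ 0%N Gl i i' (leq_ltn_trans hi hGl) (leq_ltn_trans hi' hGl)); last by rewrite filter_uniq // iota_uniq.
    by apply/eqP.
  have K := @constr_bound k' m' L M S x0 Kl (fun i => lst (G i)) (fun i => C (G i)) r
    (NoDup_nodup _ _) _ _ _ _ _ hr H hered HS.
  have En : n = (c0 + r + k'.+2 * m'.+1)%N by rewrite -Em; lia.
  rewrite card_ffun card_Sn card_ord -En in K.
  rewrite Em -fact_eq -pow_INR -expn_eq.
  have -> : (k'.+2 - 1)%coq_nat = k'.+1 by lia.
  apply: K.
  - move=> x hx; have [c [_ ->]] := In_seqmap_inv (proj1 (nodup_In dec _ x) hx); by exists c.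
  - move=> c; apply (proj2 (nodup_In dec _ _)); apply: in_seqmap; apply: In_mem; exact: mem_enum.
  - move=> i hi; have [h1 [h2 h3]] := lstP (G i); split => //; split => //; split => //.
  - move=> i c hi; have := Gin i hi; rewrite mem_filter => /andP [/pbP hg _]; exact: hg.
  - move=> i i' x hi hi' ne; apply: (comp_disj hCc hdist) => e; apply: ne; exact: Ginj.
Qed.
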